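(* Let $(X,d)$ be a compact metric space and $\emptyset\ne F\subseteq X$ with a representation $(\tilde F_k)_{k\in\mathbb{N}}$ such that $F$ is explicitly closed (w.r.t. this representation). Let $(x_n)$ be a sequence in $X$ that has approximate $F$-points. Then the set $\{x_n\mid n\in\mathbb{N}\}$ has an adherent point (a point of its closure) $x\in F$.
   Context: A representation of $F$ is a family $(\tilde F_k)_{k\in\mathbb{N}}$ of subsets of $X$ with $F=\bigcap_{k\in\mathbb{N}}\tilde F_k$; one sets $AF_k:=\bigcap_{l\le k}\tilde F_l$. $(x_n)$ has approximate $F$-points if for every $k\in\mathbb{N}$ there is $N\in\mathbb{N}$ with $x_N\in AF_k$. $F$ is explicitly closed if for every $p\in X$: if $AF_M\cap \overline{B}(p,1/(N+1))\neq\emptyset$ for all $N,M\in\mathbb{N}$, then $p\in F$ (here $\overline B$ is the closed ball). *)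

(* Defs.v *)
From Stdlib Require Import Reals List.
Open Scope R_scope.

Definition is_metric {X : Type} (d : X -> X -> R) : Prop :=
  (forall x y, 0 <= d x y) /\
  (forall x y, d x y = 0 <-> x = y) /\
  (forall x y, d x y = d y x) /\
  (forall x y z, d x z <= d x y + d y z).

Definition d_open {X : Type} (d : X -> X -> R) (U : X -> Prop) : Prop :=
  forall x, U x -> exists e, 0 < e /\ forall y, d x y < e -> U y.

Definition d_compact {X : Type} (d : X -> X -> R) : Prop :=
  forall (I : Type) (U : I -> X -> Prop),
    (forall i, d_open d (U i)) -> (forall x, exists i, U i x) ->
    exists l : list I, forall x, exists i, In i l /\ U i x.

Definition adherent {X : Type} (d : X -> X -> R) (S : X -> Prop) (x : X) : Prop :=
  forall e, 0 < e -> exists y, S y /\ d x y < e.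

Definition representation {X : Type} (F : X -> Prop) (Ft : nat -> X -> Prop) : Prop :=
  forall x, F x <-> (forall k, Ft k x).

Definition AF {X : Type} (Ft : nat -> X -> Prop) (k : nat) (x : X) : Prop :=
  forall l, (l <= k)%nat -> Ft l x.

Definition has_approx_F_points {X : Type} (Ft : nat -> X -> Prop) (xs : nat -> X) : Prop :=
  forall k, exists N, AF Ft k (xs N).

Definition cball {X : Type} (d : X -> X -> R) (p : X) (r : R) (y : X) : Prop :=
  d p y <= r.

Definition explicitly_closed {X : Type} (d : X -> X -> R)
    (F : X -> Prop) (Ft : nat -> X -> Prop) : Prop :=
  forall p,
    (forall N M : nat, exists y, AF Ft M y /\ cball d p (1 / (INR N + 1)) y) ->
    F p.

(* Main.v *)
Require Import Defs.
From Stdlib Require Import Reals List Lra Lia Classical.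
Open Scope R_scope.

Lemma AF_mono {X : Type} (Ft : nat -> X -> Prop) (K K' : nat) (x : X) :
  (K <= K')%nat -> AF Ft K' x -> AF Ft K x.
Proof. intros H A l Hl. apply A. lia. Qed.

Fixpoint maxK {X : Type} (l : list (X * R * nat)) : nat :=
  match l with nil => 0%nat | (_, _, K) :: t => Nat.max K (maxK t) end.

Lemma maxK_in {X : Type} (l : list (X * R * nat)) p e K :
  In (p, e, K) l -> (K <= maxK l)%nat.
Proof.
  induction l as [|[[a b] c] t IH]; simpl; [tauto|].
  intros [H|H]; [inversion H; subst; lia| specialize (IH H); lia].
Qed.

Theorem lemma3p6 (X : Type) (d : X -> X -> R)
  (F : X -> Prop) (Ft : nat -> X -> Prop) (xs : nat -> X) :
  is_metric d -> d_compact d ->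
  (exists x0, F x0) ->
  representation F Ft ->
  explicitly_closed d F Ft ->
  has_approx_F_points Ft xs ->
  exists x, F x /\ adherent d (fun y => exists n, y = xs n) x.
Proof.
  intros [Hpos [Hzero [Hsym Htri]]] Hc _ _ Hec Hap.
  assert (Hcl : exists p, forall e, 0 < e -> forall K, exists n,
             AF Ft K (xs n) /\ d p (xs n) < e).
  { apply NNPP; intro Hno.
    set (U := fun (i : X * R * nat) y =>
      let '(p, e, K) := i in
      0 < e /\ d p y < e /\ forall n, AF Ft K (xs n) -> e <= d p (xs n)).
    destruct (Hc _ U) as [l Hl].
    - intros [[p e] K] x [He [Hd Hn]].
      exists (e - d p x). split; [lra|]. intros y Hy.
      split; [exact He|]. split; [|exact Hn].
      specialize (Htri p x y). lra.
    - intro x.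
      assert (H1 : ~ forall e, 0 < e -> forall K, exists n,
             AF Ft K (xs n) /\ d x (xs n) < e) by (intro H; apply Hno; eauto).
      apply not_all_ex_not in H1. destruct H1 as [e H1].
      apply imply_to_and in H1. destruct H1 as [He H1].
      apply not_all_ex_not in H1. destruct H1 as [K H1].
      exists (x, e, K). simpl. split; [exact He|]. split.
      + assert (d x x = 0) by (apply Hzero; reflexivity). lra.
      + intros n Hn. destruct (Rlt_le_dec (d x (xs n)) e) as [Hlt|Hle]; [|exact Hle].
        exfalso. apply H1. exists n. split; assumption.
    - destruct (Hap (maxK l)) as [n Hn].
      destruct (Hl (xs n)) as [[[p e] K] [Hin [He [Hd Hm]]]].
      specialize (Hm n (AF_mono Ft _ _ _ (maxK_in l p e K Hin) Hn)). lra. }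
  destruct Hcl as [p Hp].
  exists p. split.
  - apply Hec. intros N M.
    assert (Hpos' : 0 < 1 / (INR N + 1)).
    { apply Rdiv_lt_0_compat; [lra|]. pose proof (pos_INR N). lra. }
    destruct (Hp _ Hpos' M) as [n [Ha Hd]].
    exists (xs n). split; [exact Ha|]. unfold cball. lra.
  - intros e He. destruct (Hp e He 0%nat) as [n [_ Hd]].
    exists (xs n). split; [eauto|exact Hd].
Qed.
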